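(* Let $\Sigma$ be a graded alphabet and $L_1,L_2$ two finite tree languages over $\Sigma$. Let $(\Sigma,Q,\nu,\delta)$ be the accessible part of the product RWTA $A_{L_1}\times A_{L_2}$ (over the semiring $(\mathbb{N},+,\times,0,1)$). Then $\mathrm{KerSeries}(L_1,L_2)=\nu(Q)=\sum_{q\in Q}\nu(q)$.
   Context: A graded alphabet is a finite set $\Sigma=\bigcup_{k\in\mathbb{N}}\Sigma_k$; $T_\Sigma$ is the set of trees $f(t_1,\ldots,t_k)$ with $f\in\Sigma_k$. A RWTA is $A=(\Sigma,Q,\nu,\delta)$ with $Q$ finite, $\nu:Q\to\mathbb{N}$, $\delta\subseteq\bigcup_k Q\times\Sigma_k\times Q^k$; $\delta(f,q_1,\ldots,q_k)=\{q\mid(q,f,q_1,\ldots,q_k)\in\delta\}$, extended to subsets by union over tuples; $\Delta(f(t_1,\ldots,t_k))=\delta(f,\Delta(t_1),\ldots,\Delta(t_k))$. The down language of a state $q$ is $L_q(A)=\{t\mid q\in\Delta(t)\}$; the accessible part of $A$ is the RWTA obtained by keeping only the states $q$ with $L_q(A)\neq\emptyset$, restricting $\nu$ and $\delta$ to them. For $A_i=(\Sigma,Q_i,\nu_i,\delta_i)$, the product $A_1\times A_2$ has states $Q_1\times Q_2$, transitions $\delta'(f,(q_{1_1},q_{2_1}),\ldots,(q_{1_k},q_{2_k}))=\delta_1(f,q_{1_1},\ldots,q_{1_k})\times\delta_2(f,q_{2_1},\ldots,q_{2_k})$, and weights $\nu'((q_1,q_2))=\nu_1(q_1)\nu_2(q_2)$.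 For $t=f(t_1,\ldots,t_k)$, $\mathrm{SubTree}(t)=\{t\}\cup\bigcup_j\mathrm{SubTree}(t_j)$; $\mathrm{SubTreeSet}(L)=\bigcup_{t\in L}\mathrm{SubTree}(t)$; $\mathrm{SubTreeSeries}_t(s)$ is the number of nodes of $t$ whose subtree equals $s$, and $\mathrm{SubTreeSeries}_L=\sum_{t\in L}\mathrm{SubTreeSeries}_t$. The sequential subtree automaton of $L$ is $A_L=(\Sigma,\mathrm{SubTreeSet}(L),\nu,\delta)$ with $\nu(t')=\mathrm{SubTreeSeries}_L(t')$ and, for $f\in\Sigma_k$, $t_{k+1}\in\delta(f,t_1,\ldots,t_k)$ iff $t_{k+1}=f(t_1,\ldots,t_k)$. The subtree series kernel is $\mathrm{KerSeries}(L_1,L_2)=\sum_{t\in T_\Sigma}\mathrm{SubTreeSeries}_{L_1}(t)\cdot\mathrm{SubTreeSeries}_{L_2}(t)$. *)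

(* Defs.v *)
From HB Require Import structures.
From Stdlib Require List.
From mathcomp Require Import all_boot.

Set Implicit Arguments.
Unset Strict Implicit.
Unset Printing Implicit Defensive.

(* Graded alphabet: a finite type [Sigma] of symbols with an arity map [ar];
   Sigma_k = [pred f | ar f == k]. *)

Section Trees.
Variable Sigma : eqType.

Inductive tree := Node of Sigma & seq tree.

Definition tree_ind' (P : tree -> Prop)
  (H : forall f ts, (forall t, List.In t ts -> P t) -> P (Node f ts)) :
  forall t, P t :=
  fix F t := match t with
  | Node f ts => H f ts
      ((fix G (l : seq tree) : forall u, List.In u l -> P u :=
          match l with
          | nil => fun u (Hu : List.In u nil) => False_ind _ Hu
          | cons a l' => fun u Hu =>
              match Hu with
              | or_introl e => eq_ind a P (F a) u e
              | or_intror h => G l' u h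
              end
          end) ts)
  end.

Fixpoint tree_enc (t : tree) : GenTree.tree Sigma :=
  let: Node f ts := t in GenTree.Node 0 (GenTree.Leaf f :: map tree_enc ts).

Fixpoint tree_dec (g : GenTree.tree Sigma) : option tree :=
  match g with
  | GenTree.Node _ (GenTree.Leaf f :: gs) => Some (Node f (pmap tree_dec gs))
  | _ => None
  end.

Lemma tree_encK : pcancel tree_enc tree_dec.
Proof.
elim/tree_ind' => f ts IH /=; congr (Some (Node f _)).
elim: ts IH => [|a l IHl] IH //=.
by rewrite IH /=; [rewrite IHl // => u Hu; apply: IH; right | left].
Qed.

HB.instance Definition _ := Equality.copy tree (pcan_type tree_encK).

Variable ar : Sigma -> nat.

Fixpoint wf_tree (t : tree) : bool :=
  let: Node f ts := t in (size ts == ar f) && all id (map wf_tree ts).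

(* SubTree(t), as a list (possibly with repetitions) *)
Fixpoint subtrees (t : tree) : seq tree :=
  let: Node f ts := t in t :: flatten (map subtrees ts).

(* SubTreeSet(L) for a finite language L given as a duplicate-free list *)
Definition SubTreeSet (L : seq tree) : seq tree :=
  undup (flatten (map subtrees L)).

Fixpoint SubTreeSeries_t (t s : tree) : nat :=
  let: Node f ts := t in (t == s) + sumn (map (fun u => SubTreeSeries_t u s) ts).

Definition SubTreeSeries (L : seq tree) (s : tree) : nat :=
  \sum_(t <- L) SubTreeSeries_t t s.

(* KerSeries(L1,L2) = sum_{t in T_Sigma} SubTreeSeries_L1(t) SubTreeSeries_L2(t).
   The summand vanishes outside SubTreeSet(L1) (a finite set), so the
   (finitely supported) sum is taken over that finite support. *)
Definition KerSeries (L1 L2 : seq tree) : nat :=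
  \sum_(t <- SubTreeSet L1) SubTreeSeries L1 t * SubTreeSeries L2 t.

(* Rational weighted tree automata over (N,+,x,0,1):
   a finite state set (duplicate-free list), weights nu, and the
   transition relation delta given by trans f [:: q1; ...; qk] q. *)
Record rwta (Q : eqType) := RWTA {
  states : seq Q;
  weight : Q -> nat;
  trans : Sigma -> seq Q -> Q -> bool }.

Definition wf_rwta (Q : eqType) (A : rwta Q) : Prop :=
  uniq (states A) /\
  forall f qs q, trans A f qs q ->
    [&& q \in states A, all (mem (states A)) qs & size qs == ar f].

Inductive accepts (Q : eqType) (A : rwta Q) : tree -> Q -> Prop :=
| acc_node f ts qs q :
    List.Forall2 (accepts A) ts qs -> trans A f qs q -> accepts A (Node f ts) q.

Definition accessible_state (Q : eqType) (A : rwta Q) (q : Q) : Prop :=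
  exists t, wf_tree t /\ accepts A t q.

Definition is_accessible_part (Q : eqType) (A B : rwta Q) : Prop :=
  [/\ uniq (states B),
      (forall q, q \in states B <-> (q \in states A /\ accessible_state A q)),
      (forall q, weight B q = weight A q) &
      (forall f qs q, trans B f qs q =
          [&& trans A f qs q, q \in states B & all (mem (states B)) qs])].

Definition prod_rwta (Q1 Q2 : eqType) (A1 : rwta Q1) (A2 : rwta Q2)
  : rwta (Q1 * Q2)%type :=
  RWTA [seq (a, b) | a <- states A1, b <- states A2]
       (fun q => weight A1 q.1 * weight A2 q.2)
       (fun f qs q => trans A1 f (unzip1 qs) q.1 && trans A2 f (unzip2 qs) q.2).

Definition subtree_automaton (L : seq tree) : rwta tree :=
  RWTA (SubTreeSet L) (SubTreeSeries L)
       (fun f ts t => [&& t == Node f ts, t \in SubTreeSet L,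
                          all (mem (SubTreeSet L)) ts & size ts == ar f]).

End Trees.

(* Main.v *)
Require Import Defs.
From HB Require Import structures.
From mathcomp Require Import all_boot.
Set Implicit Arguments. Unset Strict Implicit.

Section S.
Variable Sigma : eqType.
Implicit Types t s u : tree Sigma.

Lemma memIn (T : eqType) (x : T) l : x \in l -> List.In x l.
Proof. elim: l => //= a l IH; rewrite inE => /orP [/eqP->|/IH]; auto. Qed.

Lemma sub_self t : t \in subtrees t.
Proof. by case: t => f ts; rewrite /= inE eqxx. Qed.

Lemma child_sub (f : Sigma) (ts : seq (tree Sigma)) c : c \in ts -> c \in subtrees (Node f ts).
Proof.
move=> Hc; rewrite /= inE; apply/orP; right; apply/flattenP.
exists (subtrees c); [exact: map_f | exact: sub_self].
Qed.

Lemma sub_trans t : forall s u, s \in subtrees t -> u \in subtrees s -> u \in subtrees t.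
Proof.
elim/tree_ind': t => f ts IH s u /=; rewrite inE => /orP [/eqP->//|].
move=> /flattenP [l /mapP [c Hc ->] Hs] Hu.
rewrite inE; apply/orP; right; apply/flattenP; exists (subtrees c); first exact: map_f.
exact: (IH c (memIn Hc) s).
Qed.

Lemma wf_sub ar t : forall s, wf_tree ar t -> s \in subtrees t -> wf_tree ar s.
Proof.
elim/tree_ind': t => f ts IH s Hw /=; rewrite inE => /orP [/eqP->//|].
move=> /flattenP [l /mapP [c Hc ->] Hs].
apply: (IH c (memIn Hc)) Hs.
move: Hw => /= /andP [_ /allP H]; exact: (H _ (map_f _ Hc)).
Qed.

Lemma memST s L : reflect (exists2 t, t \in L & s \in subtrees t) (s \in SubTreeSet L).
Proof.
rewrite /SubTreeSet mem_undup; apply: (iffP flattenP).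
  by move=> [l /mapP [t Ht ->] Hs]; exists t.
by move=> [t Ht Hs]; exists (subtrees t); [exact: map_f|].
Qed.

Lemma sumn_pos (T : Type) (F : T -> nat) l : 0 < sumn (map F l) -> exists2 x, List.In x l & 0 < F x.
Proof.
elim: l => //= a l IH; case: (posnP (F a)) => [->|Ha] /=.
  by move=> /IH [x Hx Fx]; exists x; auto.
by move=> _; exists a; auto.
Qed.

Lemma SST_pos t : forall s, 0 < SubTreeSeries_t t s -> s \in subtrees t.
Proof.
elim/tree_ind': t => f ts IH s /=.
case: eqP => [->|_] /=; first by rewrite inE eqxx.
move=> /sumn_pos [c Hc Fc]; rewrite inE; apply/orP; right; apply/flattenP.
have Hc' : c \in ts by elim: ts Hc {IH} => //= a l IHl [->|/IHl]; rewrite inE ?eqxx // => ->; rewrite orbT.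
exists (subtrees c); [exact: map_f | exact: IH].
Qed.

Lemma SSTL_pos L s : 0 < SubTreeSeries L s -> s \in SubTreeSet L.
Proof.
rewrite /SubTreeSeries; elim: L => [|a L IH]; first by rewrite big_nil.
rewrite big_cons; case: (posnP (SubTreeSeries_t a s)) => [->|Ha] /=.
  move=> /IH /memST [t Ht Hs]; apply/memST; exists t => //; by rewrite inE Ht orbT.
move=> _; apply/memST; exists a; [by rewrite inE eqxx | exact: SST_pos].
Qed.
Variable ar : Sigma -> nat.
Variables L1 L2 : seq (tree Sigma).
Let P := prod_rwta (subtree_automaton ar L1) (subtree_automaton ar L2).
Definition dg (u : tree Sigma) := (u, u).

Lemma unzip_dg ts : unzip1 (map dg ts) = ts /\ unzip2 (map dg ts) = ts.
Proof. by elim: ts => //= a l [-> ->]. Qed.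

Lemma F2_dg ts qs : List.Forall2 (accepts P) ts qs ->
  (forall c, List.In c ts -> forall q, accepts P c q -> q = (c, c)) -> qs = map dg ts.
Proof.
elim => //= a b l l' Hab _ IH H; rewrite (H a _ b Hab); last by left.
by rewrite IH // => c Hc; apply: H; right.
Qed.

Lemma acc_diag t : forall q, accepts P t q -> q = (t, t).
Proof.
elim/tree_ind': t => f ts IH q H; inversion H; subst.
have E := F2_dg H2 IH; subst qs.
move: H4; rewrite /P /= !(proj1 (unzip_dg ts)) !(proj2 (unzip_dg ts)).
case: q {H} => a b /= /andP [/and4P [/eqP -> _ _ _] /and4P [/eqP -> _ _ _]] //.
Qed.

Lemma ST_closed L t c : t \in SubTreeSet L -> c \in subtrees t -> c \in SubTreeSet L.
Proof. move=> /memST [t0 H0 Ht] Hc; apply/memST; exists t0 => //; exact: sub_trans Ht Hc. Qed.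

Lemma F2_build ts : (forall c, List.In c ts -> accepts P c (c, c)) ->
  List.Forall2 (accepts P) ts (map dg ts).
Proof. elim: ts => [|a l IH] H /=; first by constructor. constructor; first by apply: H; left. by apply: IH => c Hc; apply: H; right. Qed.

Lemma diag_acc t : wf_tree ar t -> t \in SubTreeSet L1 -> t \in SubTreeSet L2 ->
  accepts P t (t, t).
Proof.
elim/tree_ind': t => f ts IH Hw H1 H2.
apply: (@acc_node _ _ _ f ts (map dg ts)).
  apply: F2_build => c Hc.
  have Hc' : c \in ts by elim: ts Hc {IH Hw H1 H2} => //= a l IHl [->|/IHl]; rewrite inE ?eqxx // => ->; rewrite orbT.
  have Hs := child_sub f Hc'.
  apply: IH => //; [exact: wf_sub Hw Hs | exact: ST_closed H1 Hs | exact: ST_closed H2 Hs].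
rewrite /P /= (proj1 (unzip_dg ts)) (proj2 (unzip_dg ts)) eqxx H1 H2 /=.
have Hsz : size ts == ar f by move: Hw => /= /andP [].
rewrite Hsz !andbT; apply/andP; split; apply/allP => c Hc /=.
  exact: ST_closed H1 (child_sub f Hc).
exact: ST_closed H2 (child_sub f Hc).
Qed.
End S.

Theorem theorem2 (Sigma : finType) (ar : Sigma -> nat)
  (L1 L2 : seq (tree Sigma)) :
  uniq L1 -> uniq L2 ->
  all (wf_tree ar) L1 -> all (wf_tree ar) L2 ->
  forall B : rwta Sigma (tree Sigma * tree Sigma)%type,
    is_accessible_part ar
      (prod_rwta (subtree_automaton ar L1) (subtree_automaton ar L2)) B ->
    KerSeries L1 L2 = \sum_(q <- states B) weight B q.
Proof.
move=> _ _ W1 _ B [uB memB wB _].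
set G := fun t => SubTreeSeries L1 t * SubTreeSeries L2 t.
have diagB : forall q, q \in states B -> q = (q.1, q.1) /\ q.1 \in SubTreeSet L1 /\ q.1 \in SubTreeSet L2.
  move=> q /memB [Hq [t [_ Ha]]].
  have E := acc_diag Ha; subst q => /=; split => //.
  move: Hq => /= /allpairsP [[a b] /= [Ha1 Hb1 [E1 E2]]]; subst. by split.
have -> : \sum_(q <- states B) weight B q = \sum_(q <- states B) G q.1.
  rewrite big_seq [RHS]big_seq; apply: eq_bigr => q Hq.
  rewrite wB; case: q Hq => a b Hq; have [E _] := diagB _ Hq; by case: E => E; subst b.
have -> : \sum_(q <- states B) G q.1 = \sum_(t <- map fst (states B)) G t by rewrite big_map.
have Hp : perm_eq (map fst (states B)) [seq t <- SubTreeSet L1 | t \in SubTreeSet L2].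
  apply: uniq_perm.
  - rewrite map_inj_in_uniq // => q q' Hq Hq' Eq.
    by rewrite (proj1 (diagB q Hq)) (proj1 (diagB q' Hq')) Eq.
  - by rewrite filter_uniq // undup_uniq.
  move=> t; rewrite mem_filter; apply/mapP/andP.
    by move=> [q Hq ->]; have [_ [H1 H2]] := diagB q Hq.
  move=> [H2 H1]; exists (t, t) => //; apply/memB; split.
    by rewrite /=; apply/allpairsP; exists (t, t).
  have Hw : wf_tree ar t.
    move: (H1) => /memST [t0 H0 Ht]; apply: wf_sub Ht; exact: (allP W1).
  rewrite /accessible_state; exists t; split => //.
  exact: (@diag_acc _ ar L1 L2 t Hw H1 H2).
rewrite (perm_big _ Hp) big_filter big_mkcond /KerSeries; apply: eq_bigr => t _.
case: ifP => // H; rewrite /G; case: (posnP (SubTreeSeries L2 t)) => [->|/SSTL_pos]; first by rewrite muln0.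
by rewrite H.
Qed.
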